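(* Let $h=(w,\xi)$ be a Charlier diagram of length $n$ and suppose the $j$-th step of $w$ is blue East or South-East of height $k$. Then $$\mathrm{cr}(\varphi_r(h);j)=\mathrm{ne}(\varphi_l(h);j)=\xi_j-1,\qquad \mathrm{ne}(\varphi_r(h);j)=\mathrm{cr}(\varphi_l(h);j)=k-\xi_j.$$
   Context: A Motzkin path of length $n$ is a sequence of points $s_0=(0,0),s_1,\dots,s_n=(n,0)$ in $\mathbb Z^2$, $s_i=(i,y_i)$, with $y_i\ge0$ and each step $(s_{i-1},s_i)$ either East ($y_i=y_{i-1}$), North-East ($y_i=y_{i-1}+1$) or South-East ($y_i=y_{i-1}-1$); the step $(s_{i-1},s_i)$ has index $i$ and height $y_{i-1}$. A restricted bicolored Motzkin path is a Motzkin path whose East steps are each colored red or blue, such that every blue East step has height $>0$. A Charlier diagram of length $n$ is a pair $h=(w,\xi)$ with $w$ a restricted bicolored Motzkin path of length $n$ and $\xi=(\xi_1,\dots,\xi_n)$ integers with $\xi_i=1$ if step $i$ is North-East or red East, and $1\le\xi_i\le k$ if step $i$ is South-East or blue East of height $k$. The partition $\varphi_l(h)$ of $[n]$ is built as follows: maintain a set $V$ (initially empty) and edge set $E$; for $i=1,\dots,n$: if step $i$ is North-East, add $i$ to $V$; if red East, do nothing; if South-East or blue East (then $|V|$ equals the height $k$ of the step), let $x$ be the $\xi_i$-th smallest element of $V$, add edge $(x,i)$ to $E$, remove $x$ from $V$, and if the step is blue East add $i$ to $V$. $\varphi_l(h)$ is the partition of $[n]$ whose blocks are the connected components of $([n],E)$.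 $\varphi_r(h)$ is defined identically except that $x$ is the $\xi_i$-th largest element of $V$. For a partition $\pi$, edges are pairs $(i,j)$, $i<j$, of consecutive elements of a block; edges $e_1=(i_1,j_1)$, $e_2=(i_2,j_2)$ form a crossing with initial edge $e_1$ if $i_1<i_2<j_1<j_2$, and a nesting with interior edge $e_2$ if $i_1<i_2<j_2<j_1$. For $j$ the right endpoint of some edge, $\mathrm{cr}(\pi;j)$ is the number of crossings whose initial edge has right endpoint $j$, and $\mathrm{ne}(\pi;j)$ the number of nestings whose interior edge has right endpoint $j$. *)

(* Defs.v *)
From HB Require Import structures.
From mathcomp Require Import all_boot all_order all_algebra.
From mathcomp Require Import ssrint.
Set Implicit Arguments. Unset Strict Implicit. Unset Printing Implicit Defensive.
Import GRing.Theory Num.Theory intZmod.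

Inductive step := NE | SE | ERed | EBlue.

Definition step_code (s : step) : nat :=
  match s with NE => 0 | SE => 1 | ERed => 2 | EBlue => 3 end.
Definition code_step (n : nat) : step :=
  match n with 0 => NE | 1 => SE | 2 => ERed | _ => EBlue end.
Lemma step_codeK : cancel step_code code_step. Proof. by case. Qed.
HB.instance Definition _ := Equality.copy step (can_type step_codeK).

Definition delta (s : step) : int :=
  match s with NE => 1 | SE => -1 | _ => 0 end%R.

(* y_i : height after the first i steps (so step i has height y_{i-1}) *)
Definition yh (w : seq step) (i : nat) : int := (\sum_(s <- take i w) delta s)%R.

(* step with index i (1-based) and its height *)
Definition stepi (w : seq step) (i : nat) : step := nth ERed w i.-1.
Definition height (w : seq step) (i : nat) : int := yh w i.-1.

Definition motzkin (n : nat) (w : seq step) : Prop :=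
  size w = n /\ (forall i, i <= n -> (0 <= yh w i)%R) /\ yh w n = 0%R.

Definition restricted_bicolored (n : nat) (w : seq step) : Prop :=
  motzkin n w /\
  (forall i, 1 <= i <= n -> stepi w i = EBlue -> (0 < height w i)%R).

Definition xii (xi : seq nat) (i : nat) : nat := nth 0 xi i.-1.

Definition charlier (n : nat) (w : seq step) (xi : seq nat) : Prop :=
  restricted_bicolored n w /\ size xi = n /\
  (forall i, 1 <= i <= n ->
     (stepi w i = NE \/ stepi w i = ERed) -> xii xi i = 1) /\
  (forall i (k : nat), 1 <= i <= n ->
     (stepi w i = SE \/ stepi w i = EBlue) -> height w i = Posz k ->
     1 <= xii xi i <= k).

(* The construction of phi_l (left = true) and phi_r (left = false).
   State: (V, E). The xi-th smallest (resp. largest) element of V. *)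
Definition select (left : bool) (V : seq nat) (r : nat) : nat :=
  nth 0 (if left then sort leq V else sort geq V) r.-1.

Definition phi_step (left : bool) (w : seq step) (xi : seq nat)
    (st : seq nat * seq (nat * nat)) (i : nat) : seq nat * seq (nat * nat) :=
  let: (V, E) := st in
  match stepi w i with
  | NE => (i :: V, E)
  | ERed => (V, E)
  | SE => let x := select left V (xii xi i) in (rem x V, (x, i) :: E)
  | EBlue => let x := select left V (xii xi i) in (i :: rem x V, (x, i) :: E)
  end.

Definition phi_edges (left : bool) (w : seq step) (xi : seq nat) : seq (nat * nat) :=
  (foldl (phi_step left w xi) ([::], [::]) (iota 1 (size w))).2.

(* Elements of [n] are represented in 'I_n.+1 (the element 0 is unused). *)
Definition ground (n : nat) : {set 'I_n.+1} := [set i : 'I_n.+1 | 0 < val i].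

Definition graph_rel (n : nat) (E : seq (nat * nat)) : rel 'I_n.+1 :=
  [rel x y | ((val x, val y) \in E) || ((val y, val x) \in E)].

Definition comp_partition (n : nat) (E : seq (nat * nat)) : {set {set 'I_n.+1}} :=
  equivalence_partition (connect (@graph_rel n E)) (ground n).

Definition phi (left : bool) (n : nat) (w : seq step) (xi : seq nat)
  : {set {set 'I_n.+1}} := @comp_partition n (phi_edges left w xi).

Definition phi_l := phi true.
Definition phi_r := phi false.

Definition pedge (n : nat) (P : {set {set 'I_n.+1}}) (i j : 'I_n.+1) : bool :=
  (i < j) && [exists B in P, [&& i \in B, j \in B &
      [forall k : 'I_n.+1, ((i < k) && (k < j)) ==> (k \notin B)]]].

Definition cr (n : nat) (P : {set {set 'I_n.+1}}) (j : nat) : nat :=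
  #|[set e : ('I_n.+1 * 'I_n.+1) * ('I_n.+1 * 'I_n.+1) |
     let: ((i1, j1), (i2, j2)) := e in
     [&& pedge P i1 j1, pedge P i2 j2, val j1 == j &
         [&& i1 < i2, i2 < j1 & j1 < j2]]]|.

Definition ne (n : nat) (P : {set {set 'I_n.+1}}) (j : nat) : nat :=
  #|[set e : ('I_n.+1 * 'I_n.+1) * ('I_n.+1 * 'I_n.+1) |
     let: ((i1, j1), (i2, j2)) := e in
     [&& pedge P i1 j1, pedge P i2 j2, val j2 == j &
         [&& i1 < i2, i2 < j2 & j2 < j1]]]|.

Arguments phi left n w xi : clear implicits.
Arguments phi_l : clear implicits.
Arguments phi_r : clear implicits.

(* Main.v *)
Require Import Defs.
From mathcomp Require Import all_boot all_order all_algebra.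
From mathcomp Require Import zify.

Section Cnt.
Variable r : rel nat.
Hypothesis rtr : transitive r.
Hypothesis rasym : forall a b, r a b -> ~~ r b a.
Hypothesis rirr : forall a, ~~ r a a.

Lemma cnt_before s p : sorted r s -> p < size s ->
  count (fun a => r a (nth 0 s p)) s = p.
Proof.
elim: s p => // a s IH [|p] /= Hs Hp.
  rewrite (negbTE (rirr a)) add0n; apply/eqP; rewrite -leqn0 leqNgt -has_count.
  apply/negP => /hasP [b Hb Hba].
  have := order_path_min rtr Hs => /allP /(_ b Hb) Hab.
  by move: (rasym _ _ Hab); rewrite Hba.
have Hs' : sorted r s by apply: path_sorted Hs.
rewrite IH //.
have := order_path_min rtr Hs => /allP /(_ (nth 0 s p)) -> //.
by apply: mem_nth.
Qed.

Lemma cnt_after s p : sorted r s -> p < size s ->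
  count (fun a => r (nth 0 s p) a) s = size s - p.+1.
Proof.
elim: s p => // a s IH [|p] /= Hs Hp.
  rewrite (negbTE (rirr a)) add0n subn1 /=.
  apply/eqP; rewrite -all_count; exact: order_path_min rtr Hs.
have Hs' : sorted r s by apply: path_sorted Hs.
rewrite IH //.
have := order_path_min rtr Hs => /allP /(_ (nth 0 s p)) H.
by rewrite (negbTE (rasym _ _ (H (mem_nth _ Hp)))).
Qed.
End Cnt.

Lemma ltn_asym a b : a < b -> ~~ (b < a).
Proof. by move=> h; rewrite -leqNgt ltnW. Qed.

Lemma select_counts (left : bool) V q : uniq V -> 1 <= q <= size V ->
  let x := select left V q in
  [/\ x \in V,
      count (fun a => x < a) V = (if left then size V - q else q - 1) &
      count (fun a => a < x) V = (if left then q - 1 else size V - q)].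
Proof.
move=> uV /andP [q1 qs] x.
have Hq : q.-1 < size V by lia.
have qq : q.-1.+1 = q by lia.
case: left @x => x.
- have sS : sorted ltn (sort leq V).
    by rewrite ltn_sorted_uniq_leq sort_uniq uV sort_sorted //; exact: leq_total.
  have pe : perm_eq (sort leq V) V := permEl (perm_sort leq V).
  have sz : size (sort leq V) = size V by rewrite size_sort.
  split.
  + by rewrite -(mem_sort leq) /x /select mem_nth // sz.
  + rewrite -(permP pe) /x /select (@cnt_after ltn ltn_trans ltn_asym) ?sz ?qq //.
    by move=> a /=; rewrite ltnn.
  + rewrite -(permP pe) /x /select (@cnt_before ltn ltn_trans ltn_asym) ?sz ?qq ?subn1 //.
    by move=> a /=; rewrite ltnn.
- have sS : sorted gtn (sort geq V).
    rewrite gtn_sorted_uniq_geq sort_uniq uV sort_sorted //.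
  have pe : perm_eq (sort geq V) V := permEl (perm_sort geq V).
  have sz : size (sort geq V) = size V by rewrite size_sort.
  have gtr : transitive gtn by move=> a b c /= h1 h2; exact: ltn_trans h2 h1.
  have gas : forall a b, gtn a b -> ~~ gtn b a by move=> a b /=; exact: ltn_asym.
  have gir : forall a, ~~ gtn a a by move=> a /=; rewrite ltnn.
  split.
  + by rewrite -(mem_sort geq) /x /select mem_nth // sz.
  + rewrite -(permP pe) /x /select.
    have := @cnt_before gtn gtr gas gir _ _ sS; rewrite sz subn1; exact.
  + rewrite -(permP pe) /x /select.
    have := @cnt_after gtn gtr gas gir _ q.-1 sS; rewrite sz qq; exact.
Qed.
Set Implicit Arguments. Unset Strict Implicit.

Section Graph.
Variable n : nat.
Variable E : seq (nat * nat).
Hypothesis HEpos : forall a b, (a, b) \in E -> 0 < a < b.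
Hypothesis Hout : forall a b b', (a, b) \in E -> (a, b') \in E -> b = b'.
Hypothesis Hin : forall a a' b, (a, b) \in E -> (a', b) \in E -> a = a'.

Inductive fwd : nat -> nat -> Prop :=
| fwd0 a : fwd a a
| fwdS a b c : (a, b) \in E -> fwd b c -> fwd a c.

Lemma fwd_le a b : fwd a b -> a <= b.
Proof.
elim=> // a0 b0 c0 /HEpos /andP [_ h] _ h2; exact: ltnW (leq_trans h h2).
Qed.

Lemma fwd_last a c : fwd a c -> a != c -> exists2 c', fwd a c' & (c', c) \in E.
Proof.
elim=> [a0|a0 b0 c0 hE hf IH] ; first by rewrite eqxx.
move=> _; case: (eqVneq b0 c0) => [<-|ne].
  by exists a0 => //; exact: fwd0.
have [c' h1 h2] := IH ne.
by exists c' => //; exact: fwdS hE h1.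
Qed.

Lemma fwd_snoc a b c : fwd a b -> (b, c) \in E -> fwd a c.
Proof.
elim=> [a0 h|a0 b0 c0 hE _ IH h]; first by apply: fwdS h (fwd0 _).
exact: fwdS hE (IH h).
Qed.

Lemma fwd_first a c : fwd a c -> a != c -> exists2 b, (a, b) \in E & fwd b c.
Proof. by case=> [a0|a0 b0 c0 h1 h2 _]; [rewrite eqxx|exists b0]. Qed.

Local Notation g := (@graph_rel n E).

Lemma connect_fwd (x y : 'I_n.+1) : connect g x y -> fwd x y \/ fwd y x.
Proof.
move/connectP=> [p hp ->] {y}.
elim: p x hp => [|z p IH] x /=; first by left; exact: fwd0.
move=> /andP [exz hp]; have := IH z hp.
set y := last z p.
move: exz; rewrite /graph_rel /= => /orP [hxz|hzx] [hzy|hyz].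
- by left; exact: fwdS hxz hzy.
- case: (eqVneq (val y) (val z)) => [eyz|nyz].
    by left; rewrite eyz; apply: fwdS hxz (fwd0 _).
  have [c' h1 h2] := fwd_last hyz nyz.
  by right; rewrite (Hin hxz h2).
- case: (eqVneq (val z) (val y)) => [ezy|nzy].
    by right; rewrite -ezy; apply: fwdS hzx (fwd0 _).
  have [b h1 h2] := fwd_first hzy nzy.
  by left; rewrite (Hout hzx h1).
- by right; exact: fwd_snoc hyz hzx.
Qed.

Lemma pedgeE (i j : 'I_n.+1) :
  pedge (@comp_partition n E) i j = ((val i, val j) \in E).
Proof.
have gsym : symmetric g by move=> a b; rewrite /graph_rel /= orbC.
have csym := sym_connect_sym gsym.
have eqR : {in ground n & &, equivalence_rel (connect g)}.
  move=> a b c _ _ _; split; first exact: connect0.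
  by move=> hab; rewrite (same_connect csym hab).
have PP := equivalence_partitionP eqR.
have pbE := pblock_equivalence_partition eqR.
have [/eqP covP tiP _] := and3P PP.
rewrite /pedge; apply/idP/idP.
- move=> /andP [ltij /existsP [B /and4P [BP iB jB /forallP Hk]]].
  have Di : i \in ground n by rewrite -covP; apply/bigcupP; exists B.
  have Dj : j \in ground n by rewrite -covP; apply/bigcupP; exists B.
  have eB : B = pblock (@comp_partition n E) i by rewrite (def_pblock tiP BP iB).
  have cij : connect g i j by rewrite -pbE // -eB.
  have fij : fwd i j.
    case: (connect_fwd cij) => // /fwd_le; rewrite leqNgt ltij //.
  have [b h1 h2] := fwd_first fij (negbT (ltn_eqF ltij)).
  have bj := fwd_le h2.
  case: (ltngtP b j) => [bltj|jb|ebj]; [|by move: jb; rewrite ltnNge bj|by move: h1; rewrite ebj].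
  have ib : i < b by case/andP: (HEpos h1).
  have bn : b < n.+1 by apply: leq_ltn_trans bj (ltn_ord j).
  have := Hk (Ordinal bn); rewrite /= ib bltj /= => bB.
  have Db : (Ordinal bn) \in ground n by rewrite inE /=; lia.
  have : Ordinal bn \in pblock (@comp_partition n E) i.
    rewrite pbE //; apply: connect1; rewrite /graph_rel /= h1 //.
  by rewrite -eB (negbTE bB).
- move=> hE.
  have [ipos ltij] := andP (HEpos hE).
  have Di : i \in ground n by rewrite inE.
  have Dj : j \in ground n by rewrite inE; exact: ltn_trans ipos ltij.
  rewrite ltij /=; apply/existsP; exists (pblock (@comp_partition n E) i).
  rewrite pblock_mem ?covP // pbE // connect0 pbE // connect1 /=; last first.
    by rewrite /graph_rel /= hE.
  apply/forallP => k; apply/implyP => /andP [ik kj].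
  apply/negP => kB.
  have Dk : k \in ground n by rewrite -covP; apply/bigcupP; exists (pblock (@comp_partition n E) i) => //; rewrite pblock_mem ?covP.
  rewrite pbE // in kB.
  have fik : fwd i k.
    case: (connect_fwd kB) => // /fwd_le; rewrite leqNgt ik //.
  have [b h1 h2] := fwd_first fik (negbT (ltn_eqF ik)).
  rewrite (Hout h1 hE) in h2.
  by move: (fwd_le h2); rewrite leqNgt kj.
Qed.
End Graph.

Section Run.
Variables (left : bool) (n : nat) (w : seq step) (xi : seq nat).
Hypothesis Hch : charlier n w xi.

Definition opener a := (stepi w a == NE) || (stepi w a == EBlue).
Definition state m := foldl (phi_step left w xi) ([::],[::]) (iota 1 m).

Lemma stateS m : state m.+1 = phi_step left w xi (state m) m.+1.
Proof. rewrite /state -[m.+1]addn1 iotaD foldl_cat /= add1n addn1. done. Qed.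

Lemma sizew : size w = n.
Proof. by case: Hch => [[[-> _] _] _]. Qed.

Lemma yhS m : m < n -> yh w m.+1 = (yh w m + delta (stepi w m.+1))%R.
Proof.
move=> mn; rewrite /yh (take_nth ERed) ?sizew // -cats1 big_cat big_seq1.
by [].
Qed.

Record Inv m (V : seq nat) (E : seq (nat * nat)) : Prop := {
  iu : uniq V;
  isz : Posz (size V) = yh w m;
  iV : forall a, a \in V -> [&& 0 < a, a <= m & opener a];
  iE : forall a b, (a, b) \in E -> [&& 0 < a, a < b, b <= m & opener a];
  iout : forall a b b', (a, b) \in E -> (a, b') \in E -> b = b';
  iin : forall a a' b, (a, b) \in E -> (a', b) \in E -> a = a';
  iopen : forall a, 0 < a <= m -> opener a ->
            (a \in V) = ~~ has (fun p => p.1 == a) E }.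

Lemma xi_ok m V E : m < n -> Inv m V E ->
  (stepi w m.+1 = SE \/ stepi w m.+1 = EBlue) -> 1 <= xii xi m.+1 <= size V.
Proof.
move=> mn I hs; case: Hch => [_ [_ [_ h2]]].
apply: h2 => //.
by rewrite /height /= (isz I).
Qed.


Lemma hasP' (E : seq (nat * nat)) a :
  reflect (exists b, (a, b) \in E) (has (fun p => p.1 == a) E).
Proof.
apply: (iffP hasP) => [[[a' b] hin /= /eqP ea]|[b hb]].
  by exists b; rewrite -ea.
by exists (a, b).
Qed.

Lemma inv_init : Inv 0 [::] [::].
Proof.
split => //; first by rewrite /yh take0 big_nil.
move=> a; lia.
Qed.

Lemma inv_step m V E : m < n -> Inv m V E ->
  Inv m.+1 (phi_step left w xi (V, E) m.+1).1 (phi_step left w xi (V, E) m.+1).2.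
Proof.
move=> mn I.
have [iu0 isz0 iV0 iE0 iout0 iin0 iopen0] := I.
have Vle : forall a, a \in V -> a <= m by move=> a /iV0 /and3P [].
have Ele : forall a b, (a, b) \in E -> b <= m by move=> a b /iE0 /and4P [].
have Elt : forall a b, (a, b) \in E -> a < b by move=> a b /iE0 /and4P [].
have m1V : m.+1 \notin V by apply/negP => /Vle; rewrite ltnn.
have nhas1 : ~~ has (fun p => p.1 == m.+1) E.
  apply/negP => /hasP' [b hb]; have := Elt _ _ hb; have := Ele _ _ hb; lia.
rewrite /phi_step; case Hs: (stepi w m.+1).
-
  have op1 : opener m.+1 by rewrite /opener Hs.
  split => /=.
  + by rewrite m1V.
  + by rewrite (yhS mn) Hs -isz0 /= -addn1 PoszD.
  + move=> a; rewrite in_cons => /orP [/eqP ->|/iV0 /and3P [-> h ->]]; first by rewrite op1 leqnn.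
    by rewrite leqW.
  + by move=> a b /iE0 /and4P [-> -> h ->]; rewrite leqW.
  + exact: iout0.
  + exact: iin0.
  + move=> a ha oa; rewrite in_cons.
    case: (eqVneq a m.+1) => [->|nea]; first by rewrite nhas1 ?eqxx ?inE ?eqxx.
    by rewrite /= iopen0 //; lia.
-
  have hq := xi_ok mn I (or_introl Hs).
  have [xV _ _] := select_counts left V _ iu0 hq.
  set x := select left V (xii xi m.+1).
  fold x in xV.
  have xle := Vle _ xV.
  have nop1 : ~~ opener m.+1 by rewrite /opener Hs.
  have xhas : ~~ has (fun p => p.1 == x) E.
    have /and3P [x0 _ ox] := iV0 _ xV.
    by rewrite -iopen0 // x0.
  split => /=.
  + exact: rem_uniq.
  + rewrite (yhS mn) Hs -isz0 /= size_rem //.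
    have : 0 < size V by case/andP: hq => h1 h2; exact: leq_trans h1 h2.
    case: (size V) => // s _ /=.
    have -> : Posz s.+1 = (Posz s + 1)%R by rewrite -addn1 PoszD.
    by rewrite GRing.addrK.
  + by move=> a /mem_rem /iV0 /and3P [-> h ->]; rewrite leqW.
  + move=> a b; rewrite in_cons => /orP [/eqP [-> ->]|/iE0 /and4P [-> -> h ->]].
      by have /and3P [-> _ ->] := iV0 _ xV; rewrite ltnS xle leqnn.
    by rewrite leqW.
  + move=> a b b' h1 h2; rewrite !in_cons in h1 h2.
    case/orP: h1 => [/eqP [ea eb]|h1]; case/orP: h2 => [/eqP [ea' eb']|h2].
    * congruence.
    * by subst a; case/negP: xhas; apply/hasP'; exists b'.
    * by subst a; case/negP: xhas; apply/hasP'; exists b.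
    * exact: iout0 h1 h2.
  + move=> a a' b h1 h2; rewrite !in_cons in h1 h2.
    case/orP: h1 => [/eqP [ea eb]|h1]; case/orP: h2 => [/eqP [ea' eb']|h2].
    * congruence.
    * by subst b; have := Ele _ _ h2; rewrite ltnn.
    * by subst b; have := Ele _ _ h1; rewrite ltnn.
    * exact: iin0 h1 h2.
  + move=> a ha oa.
    case: (eqVneq a m.+1) => [ea|nea]; first by rewrite -ea oa in nop1.
    rewrite mem_rem_uniq // inE /= iopen0 //; last by lia.
    by rewrite negb_or eq_sym.
-
  have nop1 : ~~ opener m.+1 by rewrite /opener Hs.
  split => //=.
  + by rewrite (yhS mn) Hs -isz0 /= GRing.addr0.
  + by move=> a /iV0 /and3P [-> h ->]; rewrite leqW.
  + by move=> a b /iE0 /and4P [-> -> h ->]; rewrite leqW.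
  + move=> a ha oa.
    case: (eqVneq a m.+1) => [ea|nea]; first by rewrite -ea oa in nop1.
    by rewrite iopen0 //; lia.
-
  have hq := xi_ok mn I (or_intror Hs).
  have [xV _ _] := select_counts left V _ iu0 hq.
  set x := select left V (xii xi m.+1).
  fold x in xV.
  have xle := Vle _ xV.
  have op1 : opener m.+1 by rewrite /opener Hs orbT.
  have xhas : ~~ has (fun p => p.1 == x) E.
    have /and3P [x0 _ ox] := iV0 _ xV.
    by rewrite -iopen0 // x0.
  split => /=.
  + rewrite rem_uniq // andbT; apply/negP => /mem_rem; exact/negP.
  + rewrite (yhS mn) Hs -isz0 /= size_rem // GRing.addr0.
    have : 0 < size V by case/andP: hq => h1 h2; exact: leq_trans h1 h2.
    by case: (size V).
  + move=> a; rewrite in_cons => /orP [/eqP ->|/mem_rem /iV0 /and3P [-> h ->]]; first by rewrite op1 leqnn.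
    by rewrite leqW.
  + move=> a b; rewrite in_cons => /orP [/eqP [-> ->]|/iE0 /and4P [-> -> h ->]].
      by have /and3P [-> _ ->] := iV0 _ xV; rewrite ltnS xle leqnn.
    by rewrite leqW.
  + move=> a b b' h1 h2; rewrite !in_cons in h1 h2.
    case/orP: h1 => [/eqP [ea eb]|h1]; case/orP: h2 => [/eqP [ea' eb']|h2].
    * congruence.
    * by subst a; case/negP: xhas; apply/hasP'; exists b'.
    * by subst a; case/negP: xhas; apply/hasP'; exists b.
    * exact: iout0 h1 h2.
  + move=> a a' b h1 h2; rewrite !in_cons in h1 h2.
    case/orP: h1 => [/eqP [ea eb]|h1]; case/orP: h2 => [/eqP [ea' eb']|h2].
    * congruence.
    * by subst b; have := Ele _ _ h2; rewrite ltnn.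
    * by subst b; have := Ele _ _ h1; rewrite ltnn.
    * exact: iin0 h1 h2.
  + move=> a ha oa; rewrite in_cons /=.
    case: (eqVneq a m.+1) => [ea|nea].
      have xne : (x == m.+1) = false by apply/negbTE; rewrite neq_ltn ltnS xle.
      by subst a; rewrite /= xne (negbTE nhas1).
    rewrite /= mem_rem_uniq // inE /= iopen0 //; last by lia.
    by rewrite negb_or eq_sym.
Qed.

End Run.

Lemma card_count n (V0 : seq nat) (P : pred nat) : uniq V0 -> (forall a, a \in V0 -> a <= n) ->
  #|[set a : 'I_n.+1 | (val a \in V0) && P (val a)]| = count P V0.
Proof.
move=> uV Vb.
rewrite cardE -(size_map val) -size_filter.
apply: perm_size; apply: uniq_perm.
- rewrite map_inj_uniq ?enum_uniq //; exact: val_inj.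
- exact: filter_uniq.
- move=> v; rewrite mem_filter; apply/mapP/andP.
    by move=> [a]; rewrite mem_enum inE => /andP [h1 h2] ->.
  move=> [pv vV]; have vn : v < n.+1 by rewrite ltnS Vb.
  by exists (Ordinal vn) => //; rewrite mem_enum inE /= vV pv.
Qed.

Section Count.
Variables (n : nat) (E : seq (nat * nat)) (V0 : seq nat) (x j : nat).
Hypothesis HEpos : forall a b, (a, b) \in E -> 0 < a < b.
Hypothesis Hout : forall a b b', (a, b) \in E -> (a, b') \in E -> b = b'.
Hypothesis Hin : forall a a' b, (a, b) \in E -> (a', b) \in E -> a = a'.
Hypothesis Eb : forall a b, (a, b) \in E -> b <= n.
Hypothesis F1 : (x, j) \in E.
Hypothesis F3 : forall a b, (a, b) \in E -> a < j -> j < b -> a \in V0.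
Hypothesis F4 : forall a, a \in V0 -> a != x -> exists2 b, j < b & (a, b) \in E.
Hypothesis F5 : forall a, a \in V0 -> a < j.
Hypothesis Vu : uniq V0.

Let F2 a : (a, j) \in E -> a = x.
Proof. by move=> h; exact: Hin h F1. Qed.
Let xj : x < j. Proof. by case/andP: (HEpos F1). Qed.
Let jn : j < n.+1. Proof. by rewrite ltnS (Eb F1). Qed.
Let xn : x < n.+1. Proof. exact: ltn_trans xj jn. Qed.
Let Vb a : a \in V0 -> a <= n. Proof. by move=> /F5 h; rewrite -ltnS (ltn_trans h jn). Qed.

Lemma cr_count : cr (@comp_partition n E) j = count (fun a => x < a) V0.
Proof.
rewrite -(card_count _ Vu Vb) /cr.
set S := [set e | _].
set f := (fun e : ('I_n.+1 * 'I_n.+1) * ('I_n.+1 * 'I_n.+1) => e.2.1).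
rewrite -(@card_in_imset _ _ f S).
  apply: eq_card => a; rewrite inE; apply/imsetP/andP.
  - move=> [[[i1 j1] [i2 j2]]]; rewrite inE !pedgeE // => /and4P [e1 e2 /eqP ej /and3P [l1 l2 l3]] -> /=.
    subst j; have ex := F2 e1; subst x; split => //.
    exact: F3 e2 l2 l3.
  - move=> [aV xa].
    have [b jb ab] := F4 aV (negbT (gtn_eqF xa)).
    have bn : b < n.+1 by rewrite ltnS (Eb ab).
    exists ((Ordinal xn, Ordinal jn), (a, Ordinal bn)) => //.
    by rewrite inE !pedgeE //= F1 ab eqxx xa F5.
move=> [[i1 j1] [i2 j2]] [[i1' j1'] [i2' j2']]; rewrite !inE !pedgeE //= /f /=.
move=> /and4P [e1 e2 /eqP ej /and3P [l1 l2 l3]] /and4P [e1' e2' /eqP ej' /and3P [l1' l2' l3']] ei.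
subst i2'.
have ej1 : j1 = j1' by apply: val_inj; rewrite /= ej ej'.
subst j1'.
have ei1 : i1 = i1'.
  by apply: val_inj; rewrite /= (F2 (_ : (val i1, j) \in E)) -?ej // (F2 (_ : (val i1', j) \in E)) -?ej'.
subst i1'.
have : val j2 = val j2' by apply: Hout e2 e2'.
by move/val_inj ->.
Qed.

Lemma ne_count : ne (@comp_partition n E) j = count (fun a => a < x) V0.
Proof.
rewrite -(card_count _ Vu Vb) /ne.
set S := [set e | _].
set f := (fun e : ('I_n.+1 * 'I_n.+1) * ('I_n.+1 * 'I_n.+1) => e.1.1).
rewrite -(@card_in_imset _ _ f S).
  apply: eq_card => a; rewrite inE; apply/imsetP/andP.
  - move=> [[[i1 j1] [i2 j2]]]; rewrite inE !pedgeE // => /and4P [e1 e2 /eqP ej /and3P [l1 l2 l3]] -> /=.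
    subst j; have ex := F2 e2; subst x; split => //.
    apply: F3 e1 (ltn_trans l1 l2) l3.
  - move=> [aV ax].
    have [b jb ab] := F4 aV (negbT (ltn_eqF ax)).
    have bn : b < n.+1 by rewrite ltnS (Eb ab).
    exists ((a, Ordinal bn), (Ordinal xn, Ordinal jn)) => //.
    by rewrite inE !pedgeE //= F1 ab eqxx ax xj.
move=> [[i1 j1] [i2 j2]] [[i1' j1'] [i2' j2']]; rewrite !inE !pedgeE //= /f /=.
move=> /and4P [e1 e2 /eqP ej /and3P [l1 l2 l3]] /and4P [e1' e2' /eqP ej' /and3P [l1' l2' l3']] ei.
subst i1'.
have ej2 : j2 = j2' by apply: val_inj; rewrite /= ej ej'.
subst j2'.
have ei2 : i2 = i2'.
  by apply: val_inj; rewrite /= (F2 (_ : (val i2, j) \in E)) -?ej // (F2 (_ : (val i2', j) \in E)) -?ej'.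
subst i2'.
have : val j1 = val j1' by apply: Hout e1 e1'.
by move/val_inj ->.
Qed.
End Count.

Lemma inv_state left n w xi : charlier n w xi -> forall m, m <= n ->
  Inv w m (state left w xi m).1 (state left w xi m).2.
Proof.
move=> Hch; elim=> [_|m IH mn]; first by rewrite /state /=; apply: inv_init.
rewrite stateS; move: (IH (ltnW mn)); case: (state left w xi m) => V E I.
exact: (inv_step left Hch mn I).
Qed.

Lemma state_ext left w xi m d : exists2 new,
  (state left w xi (m + d)).2 = new ++ (state left w xi m).2 &
  forall p, p \in new -> m < p.2.
Proof.
elim: d => [|d [new IH Hn]]; first by exists [::]; rewrite ?addn0.
rewrite addnS stateS; move: IH; case: (state left w xi (m + d)) => V E /= ->.
rewrite /phi_step; case: (stepi w (m + d).+1) => /=.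
- by exists new.
- exists ((select left V (xii xi (m + d).+1), (m + d).+1) :: new) => //.
  move=> p; rewrite in_cons => /orP [/eqP -> /=|/Hn //]; lia.
- by exists new.
- exists ((select left V (xii xi (m + d).+1), (m + d).+1) :: new) => //.
  move=> p; rewrite in_cons => /orP [/eqP -> /=|/Hn //]; lia.
Qed.

Lemma main_left left n w xi j k : charlier n w xi -> 1 <= j <= n ->
  (stepi w j = EBlue \/ stepi w j = SE) -> height w j = Posz k ->
  let V0 := (state left w xi j.-1).1 in
  let x := select left V0 (xii xi j) in
  [/\ cr (phi left n w xi) j = count (fun a => x < a) V0,
      ne (phi left n w xi) j = count (fun a => a < x) V0,
      uniq V0, size V0 = k & 1 <= xii xi j <= k].
Proof.
move=> Hch /andP [j1 jn] hs hk V0 x.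
have jj : j.-1.+1 = j by lia.
have jn1 : j.-1 <= n by lia.
have I0 : Inv w j.-1 V0 (state left w xi j.-1).2 by exact: (inv_state left Hch jn1).
have IN := inv_state left Hch (leqnn n).
set E0 := (state left w xi j.-1).2 in I0.
set E := (state left w xi n).2 in IN.
have sV : size V0 = k.
  by apply/eqP; rewrite -eqz_nat (isz I0) -hk.
have hq : 1 <= xii xi j <= k.
  case: Hch => [_ [_ [_ h2]]]; apply: h2 => //; first by rewrite j1.
  by case: hs => ->; [right|left].
have Ej : (state left w xi j).2 = (x, j) :: E0.
  rewrite -{1}jj stateS; rewrite /x /V0 /E0.
  case: (state left w xi j.-1) => V' E' /=; rewrite /phi_step jj.
  by case: hs => ->.
have [new Enew Hnew] := state_ext left w xi j (n - j).
rewrite subnKC // Ej in Enew.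
have phiE : phi left n w xi = @comp_partition n E.
  by rewrite /phi /phi_edges (sizew Hch).
have VN : (state left w xi n).1 = [::].
  have := isz IN; case: Hch => [[[_ [_ ->]] _] _].
  by case: (state left w xi n).1.
have [iu0 isz0 iV0 iE0 iout0 iin0 iopen0] := I0.
have [iuN iszN iVN iEN ioutN iinN iopenN] := IN.
rewrite VN in iopenN.
have E0E : forall p, p \in E0 -> p \in E.
  by move=> p hp; rewrite /E Enew mem_cat in_cons hp !orbT.
have HEpos : forall a b, (a, b) \in E -> 0 < a < b.
  by move=> a b /iEN /and4P [-> -> _ _].
have Eb : forall a b, (a, b) \in E -> b <= n.
  by move=> a b /iEN /and4P [_ _ -> _].
have F1 : (x, j) \in E by rewrite /E Enew mem_cat in_cons eqxx orbT.
have F3 : forall a b, (a, b) \in E -> a < j -> j < b -> a \in V0.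
  move=> a b hab aj jb.
  have /and4P [a0 _ _ oa] := iEN _ _ hab.
  rewrite iopen0 //; last by rewrite a0 /=; lia.
  apply/negP => /hasP' [b' hb'].
  have := ioutN _ _ _ hab (E0E _ hb'); have /and4P [_ _ b'j _] := iE0 _ _ hb'.
  lia.
have F5 : forall a, a \in V0 -> a < j.
  by move=> a /iV0 /and3P [_ h _]; lia.
have F4 : forall a, a \in V0 -> a != x -> exists2 b, j < b & (a, b) \in E.
  move=> a aV ax.
  have /and3P [a0 aj oa] := iV0 _ aV.
  have : ~~ has (fun p => p.1 == a) E = false.
    by rewrite -iopenN // a0 /=; lia.
  move/negbFE/hasP' => [b hb]; exists b => //.
  rewrite ltnNge; apply/negP => bj.
  move: hb; rewrite /E Enew mem_cat => /orP [/Hnew /= h|]; first by lia.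
  rewrite in_cons => /orP [/eqP [ea _]|hb]; first by rewrite ea eqxx in ax.
  move: aV; rewrite iopen0 //; last by rewrite a0.
  by move/negP; apply; apply/hasP'; exists b.
rewrite phiE; split => //.
- exact: (cr_count HEpos (ioutN) (iinN) Eb F1 F3 F4 F5 iu0).
- exact: (ne_count HEpos (ioutN) (iinN) Eb F1 F3 F4 F5 iu0).
Qed.

Theorem proposition3p2 (n : nat) (w : seq step) (xi : seq nat) (j k : nat) :
  charlier n w xi ->
  1 <= j <= n ->
  (stepi w j = EBlue \/ stepi w j = SE) ->
  height w j = Posz k ->
  [/\ cr (phi_r n w xi) j = (xii xi j - 1)%N,
      ne (phi_l n w xi) j = (xii xi j - 1)%N,
      ne (phi_r n w xi) j = (k - xii xi j)%N &
      cr (phi_l n w xi) j = (k - xii xi j)%N].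
Proof.
move=> Hch hj hs hk.
have [crR neR uR sR hq] := main_left false Hch hj hs hk.
have [crL neL uL sL _] := main_left true Hch hj hs hk.
have hqR : 1 <= xii xi j <= size (state false w xi j.-1).1 by rewrite sR.
have hqL : 1 <= xii xi j <= size (state true w xi j.-1).1 by rewrite sL.
have [_ cR1 cR2] := select_counts false _ _ uR hqR.
have [_ cL1 cL2] := select_counts true _ _ uL hqL.
rewrite /phi_r /phi_l crR neR crL neL cR1 cR2 cL1 cL2 /= sR sL.
by split.
Qed.
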